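(* Let $k\ge3$ and let $F_k$ be the $k(k-1)\times k$ matrix whose rows are exactly the vectors $-e_i+e_j$ and $e_i+e_j$ for all $1\le i<j\le k$ (each appearing once; $e_i$ the standard basis vectors of $\mathbb R^k$). Let $g=F_kF_k^T-\frac43\mathbb 1$, a $k(k-1)\times k(k-1)$ matrix. Then the largest singular value of $g$ is $2(k-1)-\frac43$, and the quantum value of $g$ equals $\big(2(k-1)-\tfrac43\big)k(k-1)$ (attained).
   Context: The quantum value is the supremum of $\sum_{x_1,x_2}g_{x_1,x_2}\operatorname{tr}(\rho\,\mathcal A_1(x_1)\otimes\mathcal A_2(x_2))$ over finite-dimensional complex Hilbert spaces $\mathcal H_1,\mathcal H_2$, density operators $\rho$ on $\mathcal H_1\otimes\mathcal H_2$ and Hermitian operators $\mathcal A_i(x_i)$ on $\mathcal H_i$ with eigenvalues in $[-1,1]$. *)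

(* Defs.v *)
From HB Require Import structures.
From mathcomp Require Import all_boot all_order all_algebra.
Set Implicit Arguments. Unset Strict Implicit. Unset Printing Implicit Defensive.
Import Order.TTheory GRing.Theory Num.Theory.
Local Open Scope ring_scope.

Section Defs.
Variable C : numClosedFieldType.

Definition adj m n (A : 'M[C]_(m, n)) : 'M[C]_(n, m) := map_mx Num.conj A^T.

Definition hermitian n (A : 'M[C]_n) : Prop := adj A = A.

(* Kronecker (tensor) product of matrices, C^m1 (x) C^m2 ~ C^(m1*m2)
   via the mxvec_index bijection 'I_m1 * 'I_m2 -> 'I_(m1*m2). *)
Definition kron m1 n1 m2 n2 (A : 'M[C]_(m1, n1)) (B : 'M[C]_(m2, n2))
  : 'M[C]_(m1 * m2, n1 * n2) :=
  \matrix_(i, j)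
    let: (i1, i2) := (mxvec_indexP i : 'I_m1 * 'I_m2) in
    let: (j1, j2) := (mxvec_indexP j : 'I_n1 * 'I_n2) in
    A i1 j1 * B i2 j2.

Definition density n (rho : 'M[C]_n) : Prop :=
  hermitian rho /\
  (forall x : 'cV[C]_n, 0 <= (adj x *m rho *m x) 0 0) /\
  \tr rho = 1.

Definition observable n (A : 'M[C]_n) : Prop :=
  hermitian A /\ (forall a, eigenvalue A a -> -1 <= a <= 1).

Definition qbias N n1 n2 (g : 'M[C]_N) (rho : 'M[C]_(n1 * n2))
  (A1 : 'I_N -> 'M[C]_n1) (A2 : 'I_N -> 'M[C]_n2) : C :=
  \sum_(x1 < N) \sum_(x2 < N) g x1 x2 * \tr (rho *m kron (A1 x1) (A2 x2)).

Definition singular_value m n (A : 'M[C]_(m, n)) (s : C) : Prop :=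
  0 <= s /\ eigenvalue (adj A *m A) (s ^+ 2).

Definition largest_singular_value m n (A : 'M[C]_(m, n)) (s : C) : Prop :=
  singular_value A s /\ (forall t, singular_value A t -> t <= s).

(* index set of rows of F_k: triples (i, j, b) with i < j;
   b = true encodes e_i + e_j, b = false encodes -e_i + e_j *)
Definition Fidx (k : nat) : {set 'I_k * 'I_k * bool} :=
  [set p : 'I_k * 'I_k * bool | (p.1.1 < p.1.2)%N].

Definition Frow k (p : 'I_k * 'I_k * bool) (c : 'I_k) : C :=
  (if p.2 then 1 else -1) * (c == p.1.1)%:R + (c == p.1.2)%:R.

Definition Fmat k : 'M[C]_(#|Fidx k|, k) :=
  \matrix_(r, c) Frow (enum_val r) c.

Definition gmat k : 'M[C]_(#|Fidx k|) :=
  Fmat k *m (Fmat k)^T - (4 / 3 : C)%:M.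

End Defs.

(* Main.v *)
Require Import Defs.
From HB Require Import structures.
From mathcomp Require Import all_boot all_order all_algebra.
From mathcomp Require Import sesquilinear spectral ring lra.
Set Implicit Arguments. Unset Strict Implicit. Unset Printing Implicit Defensive.
Import Order.TTheory GRing.Theory Num.Theory.
Local Open Scope ring_scope.


Section Kron.
Variable C : numClosedFieldType.

Lemma pair_mxvec_index m n (i : 'I_m) (j : 'I_n) (p : is_mxvec_index (mxvec_index i j)) :
  pair_of_mxvec_index p = (i, j).
Proof.
have H : forall k (q : is_mxvec_index k), uncurry (@mxvec_index m n) (pair_of_mxvec_index q) = k.
  by move=> k [].
have := H _ p.
case: (pair_of_mxvec_index p) => a b /= E.
have [g g1 g2] := curry_mxvec_bij m n.
have := g1 (a, b) isT; have := g1 (i, j) isT; rewrite /= E => -> //.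
Qed.

Lemma kronE m1 n1 m2 n2 (A : 'M[C]_(m1, n1)) (B : 'M[C]_(m2, n2)) i1 i2 j1 j2 :
  kron A B (mxvec_index i1 i2) (mxvec_index j1 j2) = A i1 j1 * B i2 j2.
Proof.
rewrite /kron mxE.
by rewrite (pair_mxvec_index (mxvec_indexP (mxvec_index i1 i2)))
           (pair_mxvec_index (mxvec_indexP (mxvec_index j1 j2))).
Qed.

Lemma sum_mxvec m n (F : 'I_(m * n) -> C) :
  \sum_(p < m * n) F p = \sum_(i < m) \sum_(j < n) F (mxvec_index i j).
Proof.
rewrite pair_big /=.
have [g g1 g2] := curry_mxvec_bij m n.
rewrite (reindex (uncurry (@mxvec_index m n))) /=; last first.
  by exists g => x _; [apply: g1 | apply: g2].
by apply: eq_bigr => -[i j].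
Qed.

Lemma kron_mul m1 n1 p1 m2 n2 p2 (A : 'M[C]_(m1, n1)) (B : 'M[C]_(m2, n2))
  (A' : 'M[C]_(n1, p1)) (B' : 'M[C]_(n2, p2)) :
  kron A B *m kron A' B' = kron (A *m A') (B *m B').
Proof.
apply/matrixP => p q; case/mxvec_indexP: p => i1 i2; case/mxvec_indexP: q => j1 j2.
rewrite kronE !mxE sum_mxvec big_distrlr /=.
apply: eq_bigr => a _; apply: eq_bigr => b _.
by rewrite !kronE mulrACA.
Qed.

Lemma mxvec_index_inj m n (i1 j1 : 'I_m) (i2 j2 : 'I_n) :
  (mxvec_index i1 i2 == mxvec_index j1 j2) = (i1 == j1) && (i2 == j2).
Proof.
have [g g1 g2] := curry_mxvec_bij m n.
apply/eqP/andP => [E|[/eqP-> /eqP->] //].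
have := congr1 g E.
have -> : mxvec_index i1 i2 = uncurry (@mxvec_index m n) (i1, i2) by [].
have -> : mxvec_index j1 j2 = uncurry (@mxvec_index m n) (j1, j2) by [].
by rewrite !g1 // => -[-> ->].
Qed.

Lemma kron1 m n : kron (1%:M : 'M[C]_m) (1%:M : 'M[C]_n) = 1%:M.
Proof.
apply/matrixP => p q; case/mxvec_indexP: p => i1 i2; case/mxvec_indexP: q => j1 j2.
rewrite kronE !mxE mxvec_index_inj.
by case: (i1 == j1); case: (i2 == j2); rewrite ?mulr1 ?mulr0 ?mul0r.
Qed.

Lemma hadj_kron m1 n1 m2 n2 (A : 'M[C]_(m1, n1)) (B : 'M[C]_(m2, n2)) :
  adj (kron A B) = kron (adj A) (adj B).
Proof.
apply/matrixP => p q; case/mxvec_indexP: p => i1 i2; case/mxvec_indexP: q => j1 j2.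
rewrite kronE [LHS]mxE [X in X^*]mxE kronE rmorphM.
by rewrite ![adj _ _ _]mxE ![_^T _ _]mxE.
Qed.

Lemma hadjM m n p (A : 'M[C]_(m, n)) (B : 'M[C]_(n, p)) : adj (A *m B) = adj B *m adj A.
Proof. by rewrite /adj trmx_mul map_mxM. Qed.

Lemma hadjK m n (A : 'M[C]_(m, n)) : adj (adj A) = A.
Proof. by apply/matrixP => i j; rewrite !mxE conjCK. Qed.

Lemma hadjD m n (A B : 'M[C]_(m, n)) : adj (A + B) = adj A + adj B.
Proof. by apply/matrixP => i j; rewrite !mxE rmorphD. Qed.

Lemma hadjN m n (A : 'M[C]_(m, n)) : adj (- A) = - adj A.
Proof. by apply/matrixP => i j; rewrite !mxE rmorphN. Qed.

Lemma hadjZ m n c (A : 'M[C]_(m, n)) : adj (c *: A) = c^* *: adj A.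
Proof. by apply/matrixP => i j; rewrite !mxE rmorphM. Qed.

Lemma hadj_sum m n I (r : seq I) (P : pred I) (F : I -> 'M[C]_(m, n)) :
  adj (\sum_(i <- r | P i) F i) = \sum_(i <- r | P i) adj (F i).
Proof.
apply: (big_morph (@adj C m n) (@hadjD m n)).
by apply/matrixP => i j; rewrite !mxE rmorph0.
Qed.

Lemma hadj1 n : adj (1%:M : 'M[C]_n) = 1%:M.
Proof. by apply/matrixP => i j; rewrite !mxE rmorphMn rmorph1 eq_sym. Qed.

Lemma tr_hadj n (A : 'M[C]_n) : \tr (adj A) = (\tr A)^*.
Proof. by rewrite /mxtrace rmorph_sum; apply: eq_bigr => i _; rewrite !mxE. Qed.

End Kron.


Section Form.
Variable C : numClosedFieldType.
Variable n : nat.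
Variable rho : 'M[C]_n.

Definition phi (X Y : 'M[C]_n) := \tr (adj X *m rho *m Y).

Lemma phiDr X Y1 Y2 : phi X (Y1 + Y2) = phi X Y1 + phi X Y2.
Proof. by rewrite /phi mulmxDr mxtraceD. Qed.
Lemma phiNr X Y : phi X (- Y) = - phi X Y.
Proof. by rewrite /phi mulmxN raddfN. Qed.
Lemma phiZr X c Y : phi X (c *: Y) = c * phi X Y.
Proof. by rewrite /phi -scalemxAr mxtraceZ. Qed.
Lemma phiDl X1 X2 Y : phi (X1 + X2) Y = phi X1 Y + phi X2 Y.
Proof. by rewrite /phi hadjD !mulmxDl mxtraceD. Qed.
Lemma phiNl X Y : phi (- X) Y = - phi X Y.
Proof. by rewrite /phi hadjN !mulNmx raddfN. Qed.
Lemma phiZl X c Y : phi (c *: X) Y = c^* * phi X Y.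
Proof. by rewrite /phi hadjZ -!scalemxAl mxtraceZ. Qed.
Lemma phi_sumr I (r : seq I) (P : pred I) X (F : I -> 'M_n) :
  phi X (\sum_(i <- r | P i) F i) = \sum_(i <- r | P i) phi X (F i).
Proof.
elim/big_rec2: _ => [|i y Z _ <-]; first by rewrite /phi mulmx0 mxtrace0.
by rewrite phiDr.
Qed.
Lemma phi_suml I (r : seq I) (P : pred I) Y (F : I -> 'M_n) :
  phi (\sum_(i <- r | P i) F i) Y = \sum_(i <- r | P i) phi (F i) Y.
Proof.
elim/big_rec2: _ => [|i y Z _ <-].
  rewrite /phi; have -> : adj (0 : 'M[C]_n) = 0 by apply/matrixP => i j; rewrite !mxE rmorph0.
  by rewrite !mul0mx mxtrace0.
by rewrite phiDl.
Qed.

Hypothesis rho_herm : Defs.hermitian rho.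
Hypothesis rho_psd : forall x : 'cV[C]_n, 0 <= (adj x *m rho *m x) 0 0.

Lemma phi_conj X Y : (phi X Y)^* = phi Y X.
Proof.
rewrite /phi -tr_hadj !hadjM hadjK.
by rewrite rho_herm mulmxA.
Qed.

Lemma phi_ge0 X : 0 <= phi X X.
Proof.
rewrite /phi /mxtrace; apply: sumr_ge0 => j _.
have := rho_psd (col j X).
suff -> : (adj X *m rho *m X) j j = (adj (col j X) *m rho *m col j X) 0 0 by [].
rewrite !mxE; apply: eq_bigr => l _; rewrite !mxE; congr (_ * _).
by apply: eq_bigr => l' _; rewrite !mxE.
Qed.

End Form.

Section Key.
Variable C : numClosedFieldType.

Definition realm m n (A : 'M[C]_(m, n)) := map_mx Num.conj A = A.

Lemma realmE m n (A : 'M[C]_(m, n)) : realm A -> forall i j, (A i j)^* = A i j.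
Proof. by rewrite /realm => rA i j; rewrite -{2}rA mxE. Qed.

Lemma hadj_real m n (A : 'M[C]_(m, n)) : realm A -> adj A = A^T.
Proof. by move=> rA; rewrite /adj -map_trmx rA. Qed.

Lemma gram n (rho : 'M[C]_n) p N (R : 'M[C]_(p, N)) (b : 'I_N -> 'M[C]_n) :
  realm R ->
  \sum_(z < p) phi rho (\sum_(y < N) R z y *: b y) (\sum_(y < N) R z y *: b y)
  = \sum_(y < N) \sum_(y' < N) (R^T *m R) y y' * phi rho (b y) (b y').
Proof.
move=> rR.
have cR := realmE rR.
transitivity (\sum_(z < p) \sum_(y < N) \sum_(y' < N)
    R z y * R z y' * phi rho (b y) (b y')).
  apply: eq_bigr => z _; rewrite phi_suml; apply: eq_bigr => y _.
  rewrite phiZl phi_sumr big_distrr; apply: eq_bigr => y' _.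
  rewrite phiZr cR; exact: mulrA.
rewrite exchange_big; apply: eq_bigr => y _; rewrite exchange_big.
apply: eq_bigr => y' _; rewrite !mxE big_distrl; apply: eq_bigr => z _.
by rewrite mxE.
Qed.

Definition Qf n (rho : 'M[C]_n) N (M : 'M[C]_N) (b : 'I_N -> 'M[C]_n) :=
  \sum_(y < N) \sum_(y' < N) M y y' * phi rho (b y) (b y').

Lemma QfD n rho N (M1 M2 : 'M[C]_N) b :
  Qf rho (M1 + M2) b = Qf (n:=n) rho M1 b + Qf rho M2 b.
Proof.
rewrite /Qf -big_split; apply: eq_bigr => y _; rewrite -big_split.
by apply: eq_bigr => y' _; rewrite mxE mulrDl.
Qed.

Lemma QfZ n rho N c (M : 'M[C]_N) b :
  Qf rho (c *: M) b = c * Qf (n:=n) rho M b.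
Proof.
rewrite /Qf big_distrr; apply: eq_bigr => y _; rewrite big_distrr.
by apply: eq_bigr => y' _; rewrite mxE /= mulrA.
Qed.

Lemma Qf1 n rho N b : Qf (n:=n) rho (1%:M : 'M_N) b = \sum_(y < N) phi rho (b y) (b y).
Proof.
rewrite /Qf; apply: eq_bigr => y _.
rewrite (bigD1 y) //= big1 ?addr0 => [|y' ne]; first by rewrite mxE eqxx mul1r.
by rewrite mxE eq_sym (negPf ne) mul0r.
Qed.

End Key.


Section Key2.
Variable C : numClosedFieldType.

Lemma key n (rho : 'M[C]_n) N (g M : 'M[C]_N) (a b : 'I_N -> 'M[C]_n) (lam c : C) :
  Defs.hermitian rho -> (forall x : 'cV[C]_n, 0 <= (adj x *m rho *m x) 0 0) ->
  realm g -> realm M -> 0 < lam -> 0 <= c ->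
  g^T *m g = lam ^+ 2 *: 1%:M - c *: (M^T *m M) ->
  (forall x, phi rho (a x) (a x) <= 1) -> (forall y, phi rho (b y) (b y) <= 1) ->
  (forall x y, phi rho (b y) (a x) = phi rho (a x) (b y)) ->
  \sum_x \sum_y g x y * phi rho (a x) (b y) <= lam * N%:R.
Proof.
move=> rh rp rg rM lam0 c0 gg aa bb ba.
have cg := realmE rg.
have cl : lam^* = lam by apply: conj_Creal; apply: gtr0_real.
set S := \sum_x _.
pose cx x := \sum_(y < N) g x y *: b y.
set SA := \sum_(x < N) phi rho (a x) (a x).
set SB := \sum_(y < N) phi rho (b y) (b y).
set SC := \sum_(x < N) phi rho (cx x) (cx x).
set QM := \sum_(z < N) phi rho (\sum_(y < N) M z y *: b y) (\sum_(y < N) M z y *: b y).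
set T := \sum_(x < N) phi rho (lam *: a x - cx x) (lam *: a x - cx x).
have T0 : 0 <= T by apply: sumr_ge0 => x _; apply: phi_ge0.
have QM0 : 0 <= QM by apply: sumr_ge0 => x _; apply: phi_ge0.
have SAN : SA <= N%:R.
  rewrite -[N in N%:R]card_ord -sumr_const; apply: ler_sum => x _; exact: aa.
have SBN : SB <= N%:R.
  rewrite -[N in N%:R]card_ord -sumr_const; apply: ler_sum => x _; exact: bb.
have EC : SC = lam ^+ 2 * SB - c * QM.
  rewrite /SC /cx gram // gg -/(Qf rho _ b) QfD QfZ -scaleNr QfZ Qf1.
  by rewrite /QM gram // /Qf mulNr.
have ET : T = lam ^+ 2 * SA - 2 * lam * S + SC.
  rewrite /T /SA /SC /S !mulr_sumr -sumrN -!big_split /=.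
  apply: eq_bigr => x _.
  rewrite phiDl phiNl !phiDr !phiNr !phiZl !phiZr cl.
  have -> : phi rho (a x) (cx x) = \sum_y g x y * phi rho (a x) (b y).
    by rewrite phi_sumr; apply: eq_bigr => y _; rewrite phiZr.
  have -> : phi rho (cx x) (a x) = \sum_y g x y * phi rho (a x) (b y).
    by rewrite phi_suml; apply: eq_bigr => y _; rewrite phiZl cg ba.
  ring.
have E : 2 * lam * (lam * N%:R - S) =
  lam ^+ 2 * (N%:R - SA) + lam ^+ 2 * (N%:R - SB) + c * QM + T.
  rewrite ET EC; ring.
have : 0 <= 2 * lam * (lam * N%:R - S).
  rewrite E; apply: addr_ge0; last exact: T0.
  apply: addr_ge0; last exact: mulr_ge0.
  apply: addr_ge0; apply: mulr_ge0;
    by [rewrite subr_ge0 | apply: exprn_ge0; apply: ltW].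
move=> H; rewrite -subr_ge0; move: H; rewrite pmulr_rge0 //; exact: mulr_gt0.
Qed.

End Key2.


Section Obs.
Variable C : numClosedFieldType.

Lemma obs_sq n (A : 'M[C]_n) : observable A ->
  exists W : 'M[C]_n, 1%:M - A *m A = adj W *m W.
Proof.
move=> [hA eA].
have nA : A \is normalmx.
  apply/normalmxP; change (A *m adj A = adj A *m A); by rewrite hA.
set P := spectralmx A; set d := spectral_diag A.
have PU : P \is unitarymx := spectral_unitarymx A.
have PP : P *m adj P = 1%:M := unitarymxP PU.
have PP' : adj P *m P = 1%:M := mulmx1C PP.
have eA' : A = adj P *m diag_mx d *m P.
  by rewrite {1}(orthomx_spectralP nA) invmx_unitary.
have ev : forall i, eigenvalue A (d 0 i).
  move=> i; apply/eigenvalueP; exists (row i P).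
    rewrite eA' !mulmxA -row_mul PP -row_mul mul1mx -row_mul mul_diag_mx.
    by apply/rowP => j; rewrite !mxE.
  apply/eqP => h; have := congr1 (fun M => M *m adj P) h.
  rewrite /= -row_mul PP mul0mx => /rowP/(_ i); rewrite !mxE eqxx /=.
  by move/eqP; rewrite oner_eq0.
have hd : forall i, 0 <= 1 - d 0 i ^+ 2.
  move=> i; have /andP[h1 h2] := eA _ (ev i).
  have -> : 1 - d 0 i ^+ 2 = (1 - d 0 i) * (d 0 i - (-1)) by ring.
  by apply: mulr_ge0; rewrite subr_ge0.
pose s := \row_i sqrtC (1 - d 0 i ^+ 2).
exists (diag_mx s *m P).
have -> : 1%:M - A *m A = adj P *m (1%:M - diag_mx d *m diag_mx d) *m P.
  rewrite mulmxBr mulmxBl mulmx1 PP' eA' !mulmxA.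
  by rewrite -[adj P *m diag_mx d *m P *m adj P]mulmxA PP mulmx1.
rewrite hadjM !mulmxA; congr (_ *m _); rewrite -!mulmxA; congr (_ *m _).
rewrite mulmx_diag /adj tr_diag_mx map_diag_mx mulmx_diag -diag_const_mx.
rewrite -raddfB /=; congr diag_mx; apply/rowP => j; rewrite !mxE.
have h0 : 0 <= sqrtC (1 - d 0 j ^+ 2) by rewrite sqrtC_ge0.
by rewrite conj_Creal ?ger0_real // -[RHS]expr2 sqrtCK expr2.
Qed.

End Obs.

Section Bound.
Variable C : numClosedFieldType.
Variables n1 n2 : nat.
Variable rho : 'M[C]_(n1 * n2).

Lemma kronBl m1 p1 m2 p2 (A B : 'M[C]_(m1, p1)) (D : 'M[C]_(m2, p2)) :
  kron (A - B) D = kron A D - kron B D.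
Proof.
apply/matrixP => p q; case/mxvec_indexP: p => i1 i2; case/mxvec_indexP: q => j1 j2.
by rewrite [LHS]kronE [RHS]mxE [X in _ = _ + X]mxE !kronE !mxE; ring.
Qed.

Lemma kronBr m1 p1 m2 p2 (A : 'M[C]_(m1, p1)) (B D : 'M[C]_(m2, p2)) :
  kron A (B - D) = kron A B - kron A D.
Proof.
apply/matrixP => p q; case/mxvec_indexP: p => i1 i2; case/mxvec_indexP: q => j1 j2.
by rewrite [LHS]kronE [RHS]mxE [X in _ = _ + X]mxE !kronE !mxE; ring.
Qed.

Lemma phi_swap (X Y : 'M[C]_(n1 * n2)) : Defs.hermitian X ->
  phi rho X Y = \tr (rho *m (Y *m X)).
Proof.
by move=> hX; rewrite /phi hX -mulmxA [LHS]mxtrace_mulC mulmxA.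
Qed.

Lemma herm_kron (A : 'M[C]_n1) (B : 'M[C]_n2) :
  Defs.hermitian A -> Defs.hermitian B -> Defs.hermitian (kron A B).
Proof. by move=> hA hB; rewrite /Defs.hermitian hadj_kron hA hB. Qed.

Lemma herm1 m : Defs.hermitian (1%:M : 'M[C]_m).
Proof. exact: hadj1. Qed.

Lemma phi_ab (A : 'M[C]_n1) (B : 'M[C]_n2) : Defs.hermitian A -> Defs.hermitian B ->
  phi rho (kron A 1%:M) (kron 1%:M B) = \tr (rho *m kron A B).
Proof.
move=> hA hB; rewrite phi_swap; last exact: herm_kron hA (herm1 _).
by rewrite kron_mul mul1mx mulmx1.
Qed.

Lemma phi_ba (A : 'M[C]_n1) (B : 'M[C]_n2) : Defs.hermitian A -> Defs.hermitian B ->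
  phi rho (kron 1%:M B) (kron A 1%:M) = \tr (rho *m kron A B).
Proof.
move=> hA hB; rewrite phi_swap; last exact: herm_kron (herm1 _) hB.
by rewrite kron_mul mul1mx mulmx1.
Qed.

Hypothesis drho : density rho.

Lemma tr_psd (V : 'M[C]_(n1 * n2)) : 0 <= \tr (rho *m (adj V *m V)).
Proof.
have [hr [pr _]] := drho.
rewrite mulmxA mxtrace_mulC mulmxA.
have := phi_ge0 pr (adj V).
by rewrite /phi hadjK.
Qed.

Lemma phi_aa (A : 'M[C]_n1) : observable A ->
  phi rho (kron A 1%:M) (kron A 1%:M) <= 1.
Proof.
move=> oA; have [W EW] := obs_sq oA.
have [hr [pr t1]] := drho.
rewrite phi_swap; last exact: herm_kron oA.1 (herm1 _).
rewrite kron_mul mulmx1 -subr_ge0.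
have -> : 1 - \tr (rho *m kron (A *m A) 1%:M) =
   \tr (rho *m (adj (kron W 1%:M) *m kron W 1%:M)).
  rewrite hadj_kron kron_mul hadj1 mulmx1 -EW kronBl kron1 mulmxBr raddfB /=.
  by rewrite mulmx1 t1.
exact: tr_psd.
Qed.

Lemma phi_bb (B : 'M[C]_n2) : observable B ->
  phi rho (kron 1%:M B) (kron 1%:M B) <= 1.
Proof.
move=> oB; have [W EW] := obs_sq oB.
have [hr [pr t1]] := drho.
rewrite phi_swap; last exact: herm_kron (herm1 _) oB.1.
rewrite kron_mul mulmx1 -subr_ge0.
have -> : 1 - \tr (rho *m kron 1%:M (B *m B)) =
   \tr (rho *m (adj (kron 1%:M W) *m kron 1%:M W)).
  rewrite hadj_kron kron_mul hadj1 mulmx1 -EW kronBr kron1 mulmxBr raddfB /=.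
  by rewrite mulmx1 t1.
exact: tr_psd.
Qed.

End Bound.


Section Fmat.
Variable C : numClosedFieldType.
Variable k : nat.

Lemma sum_sym (f : 'I_k -> C) :
  \sum_(q : 'I_k * 'I_k | (q.1 < q.2)%N) (f q.1 + f q.2) = (k - 1)%:R * \sum_i f i.
Proof.
rewrite big_split /=.
rewrite [X in _ + X](reindex_inj (h := fun q : 'I_k * 'I_k => (q.2, q.1))); last first.
  by move=> [a b] [a' b'] /= [-> ->].
rewrite /=.
have -> : \sum_(q : 'I_k * 'I_k | (q.1 < q.2)%N) f q.1 +
    \sum_(q : 'I_k * 'I_k | (q.2 < q.1)%N) f q.1 =
    \sum_(q : 'I_k * 'I_k | q.1 != q.2) f q.1.
  rewrite [RHS](bigID (fun q : 'I_k * 'I_k => (q.1 < q.2)%N)) /=.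
  congr (_ + _); apply: eq_bigl => -[a b] /=; rewrite -val_eqE /=;
    by case: ltngtP.
rewrite -(pair_big_dep xpredT (fun i j => i != j) (fun i j => f i)) /=.
rewrite mulr_sumr; apply: eq_bigr => i _.
have : \sum_(j < k) f i = f i + \sum_(j < k | j != i) f i by rewrite (bigD1 i).
rewrite sumr_const card_ord => E.
have -> : \sum_(j < k | i != j) f i = \sum_(j < k | j != i) f i.
  by apply: eq_bigl => j; rewrite eq_sym.
have -> : \sum_(j < k | j != i) f i = f i *+ k - f i by rewrite E; ring.
clear E; case: k f i => [|k'] f i; first by case: i.
by rewrite subn1 /= mulr_natl mulrS addrAC subrr add0r.
Qed.

Lemma sum_Fidx (h : 'I_k * 'I_k * bool -> C) :
  \sum_(r < #|Fidx k|) h (enum_val r) =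
  \sum_(q : 'I_k * 'I_k | (q.1 < q.2)%N) (h (q, true) + h (q, false)).
Proof.
rewrite -big_enum_val /=.
have -> : \sum_(x in Fidx k) h x = \sum_(x : 'I_k * 'I_k * bool | (x.1.1 < x.1.2)%N) h x.
  by apply: eq_bigl => x; rewrite /Fidx inE.
transitivity (\sum_(q : 'I_k * 'I_k | (q.1 < q.2)%N) \sum_(b : bool) h (q, b)).
  rewrite pair_big_dep /=; apply: eq_big => [[q b]|[q b] _] //=; by rewrite andbT.
apply: eq_bigr => q _; exact: big_bool.
Qed.

Lemma sum_delta (i j : 'I_k) :
  \sum_(c < k) (c == i)%:R * (c == j)%:R = (i == j)%:R :> C.
Proof.
rewrite (bigD1 i) //= eqxx mul1r big1 ?addr0 1?eq_sym // => c ne.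
by rewrite (negPf ne) mul0r.
Qed.

Local Notation F := (Fmat C k).
Local Notation d := (2 * (k - 1)%:R : C).

Lemma FtF : F^T *m F = d%:M.
Proof.
apply/matrixP => c c'; rewrite !mxE.
transitivity (\sum_(r < #|Fidx k|) Frow C (enum_val r) c * Frow C (enum_val r) c').
  by apply: eq_bigr => r _; rewrite !mxE.
rewrite (sum_Fidx (fun p => Frow C p c * Frow C p c')).
pose f := fun i : 'I_k => (c == i)%:R * (c' == i)%:R : C.
transitivity (2 * \sum_(q : 'I_k * 'I_k | (q.1 < q.2)%N) (f q.1 + f q.2)).
  by rewrite mulr_sumr; apply: eq_bigr => q _; rewrite /Frow /f /=; ring.
rewrite sum_sym.
have -> : \sum_i f i = (c == c')%:R.
  rewrite -sum_delta; apply: eq_bigr => i _; by rewrite /f eq_sym [(c' == i)]eq_sym.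
by case: (c == c'); rewrite ?mulr1 ?mulr0 ?mulr1n ?mulr0n.
Qed.

Lemma realF : realm F.
Proof.
apply/matrixP => r c; rewrite !mxE /Frow.
by case: (enum_val r).2; rewrite ?rmorphD ?rmorphM ?rmorphN ?rmorph1 ?rmorph_nat.
Qed.

End Fmat.


Section Gmat.
Variable C : numClosedFieldType.
Variable k : nat.
Local Notation F := (Fmat C k).
Local Notation d := (2 * (k - 1)%:R : C).
Local Notation P := (F *m F^T).
Local Notation g := (gmat C k).

Lemma PP : P *m P = d *: P.
Proof. by rewrite mulmxA -(mulmxA F) FtF mul_mx_scalar -scalemxAl. Qed.

Lemma Psym : P^T = P.
Proof. by rewrite trmx_mul trmxK. Qed.

Lemma realmM m n p (A : 'M[C]_(m, n)) (B : 'M[C]_(n, p)) :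
  realm A -> realm B -> realm (A *m B).
Proof. by rewrite /realm map_mxM => -> ->. Qed.
Lemma realmT m n (A : 'M[C]_(m, n)) : realm A -> realm A^T.
Proof. by rewrite /realm -map_trmx => ->. Qed.
Lemma realmB m n (A B : 'M[C]_(m, n)) : realm A -> realm B -> realm (A - B).
Proof. by rewrite /realm map_mxB => -> ->. Qed.
Lemma realmS n (a : C) : a^* = a -> realm (a%:M : 'M_n).
Proof. by rewrite /realm map_scalar_mx /= => ->. Qed.

Lemma conj_d : d^* = d.
Proof. by rewrite rmorphM !rmorph_nat. Qed.

Lemma realP : realm P.
Proof. exact: realmM (realF C k) (realmT (realF C k)). Qed.

Lemma realg : realm g.
Proof.
apply: realmB realP _; apply: realmS.
by rewrite fmorph_div !rmorph_nat.
Qed.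

Lemma gsym : g^T = g.
Proof. by rewrite /gmat linearB /= Psym tr_scalar_mx. Qed.

Definition Mm := d%:M - P.

Lemma Msym : Mm^T = Mm.
Proof. by rewrite /Mm linearB /= Psym tr_scalar_mx. Qed.

Lemma realMm : realm Mm.
Proof. by rewrite /Mm; apply: realmB; [apply: realmS; exact: conj_d | exact: realP]. Qed.

Lemma absM N (X : 'M[C]_N) (D : C) : X *m X = D *: X ->
  (D%:M - X) *m (D%:M - X) = D *: (D%:M - X).
Proof.
move=> XX; rewrite mulmxBl !mulmxBr XX !mul_mx_scalar !mul_scalar_mx.
apply/matrixP => i j; rewrite !mxE; case: (i == j); rewrite ?mulr1n ?mulr0n; ring.
Qed.

Lemma absg N (X : 'M[C]_N) (D a c : C) : X *m X = D *: X -> D != 0 ->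
  c = (D - 2 * a) / D ->
  (X - a%:M) *m (X - a%:M) = (D - a) ^+ 2 *: 1%:M - c *: (D *: (D%:M - X)).
Proof.
move=> XX dn0 ->.
rewrite mulmxBl !mulmxBr XX !mul_mx_scalar !mul_scalar_mx.
apply/matrixP => i j; rewrite !mxE; case: (i == j); rewrite ?mulr1n ?mulr0n; field; exact: dn0.
Qed.

Lemma MtM : Mm^T *m Mm = d *: Mm.
Proof. by rewrite Msym /Mm absM // PP. Qed.

Lemma g2 (c : C) : d != 0 -> c = (d - 8 / 3) / d ->
  g^T *m g = (d - 4 / 3) ^+ 2 *: 1%:M - c *: (Mm^T *m Mm).
Proof.
move=> dn0 ce.
rewrite MtM gsym /gmat /Mm; apply: absg => //; first exact: PP.
by rewrite ce; congr (_ / _); field.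
Qed.

End Gmat.


Section Upper.
Variable C : numClosedFieldType.
Variable m : nat.
Local Notation k := m.+3.
Local Notation d := (2 * (k - 1)%:R : C).
Local Notation lam := (2 * (k - 1)%:R - 4 / 3 : C).

Lemma km1 : (k - 1)%:R = m%:R + 2 :> C.
Proof. by rewrite subn1 /= -addn2 natrD. Qed.

Lemma d_gt0 : 0 < d.
Proof. by rewrite km1 mulr_gt0 // ltr_wpDl // ltr0n. Qed.

Lemma d_neq0 : d != 0.
Proof. by rewrite gt_eqF // d_gt0. Qed.

Lemma lam_gt0 : 0 < lam.
Proof.
have -> : lam = 2 * m%:R + 8 / 3 by rewrite km1; field.
by rewrite ltr_wpDl ?mulr_ge0 ?ler0n // divr_gt0 // ltr0n.
Qed.

Lemma c_ge0 : 0 <= (d - 8 / 3) / d.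
Proof.
rewrite divr_ge0 ?ltW ?d_gt0 //.
have -> : d - 8 / 3 = 2 * m%:R + 4 / 3 by rewrite km1; field.
by rewrite ltr_wpDl ?mulr_ge0 ?ler0n // divr_gt0 // ltr0n.
Qed.

Lemma cardF : (#|Fidx k|%:R : C) = (k * (k - 1))%:R.
Proof.
rewrite -[X in X%:R]card_ord -sumr_const.
rewrite (sum_Fidx (fun _ => (1 : C))).
rewrite (sum_sym (fun _ => (1 : C))) sumr_const card_ord natrM mulrC.
by rewrite mulr_natr.
Qed.

Lemma upper n1 n2 (rho : 'M[C]_(n1 * n2))
  (A1 : 'I_#|Fidx k| -> 'M[C]_n1) (A2 : 'I_#|Fidx k| -> 'M[C]_n2) :
  density rho -> (forall x, observable (A1 x)) -> (forall x, observable (A2 x)) ->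
  qbias (gmat C k) rho A1 A2 <= lam * (k * (k - 1))%:R.
Proof.
move=> dr o1 o2.
have [hr [pr _]] := dr.
rewrite -cardF /qbias.
have -> : \sum_(x1 < #|Fidx k|) \sum_(x2 < #|Fidx k|)
    gmat C k x1 x2 * \tr (rho *m kron (A1 x1) (A2 x2)) =
  \sum_x1 \sum_x2 gmat C k x1 x2 * phi rho (kron (A1 x1) 1%:M) (kron 1%:M (A2 x2)).
  apply: eq_bigr => x _; apply: eq_bigr => y _.
  by rewrite phi_ab //; [exact: (o1 x).1 | exact: (o2 y).1].
apply: (key (M := Mm C k) (c := (d - 8 / 3) / d)) => //.
- exact: realg.
- exact: realMm.
- exact: lam_gt0.
- exact: c_ge0.
- by apply: g2 => //; exact: d_neq0.
- by move=> x; apply: phi_aa.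
- by move=> y; apply: phi_bb.
- move=> x y; rewrite phi_ba ?phi_ab //; [exact: (o1 x).1 | exact: (o2 y).1|
    exact: (o1 x).1 | exact: (o2 y).1].
Qed.

End Upper.


Section Sing.
Variable C : numClosedFieldType.

Lemma q_ge0 n (w : 'rV[C]_n) : 0 <= (w *m adj w) 0 0.
Proof.
rewrite mxE; apply: sumr_ge0 => j _; rewrite !mxE; exact: mul_conjC_ge0.
Qed.

Lemma q_gt0 n (w : 'rV[C]_n) : w != 0 -> 0 < (w *m adj w) 0 0.
Proof.
move=> wn0.
have [j wj] : exists j, w 0 j != 0.
  apply/existsP; apply: contraR wn0; rewrite negb_exists => /forallP H.
  by apply/eqP/rowP => j; rewrite mxE; apply/eqP; move: (H j); rewrite negbK.
rewrite mxE (bigD1 j) //=.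
apply: (@lt_le_trans _ _ (w 0 j * adj w j 0)).
  by rewrite !mxE mul_conjC_gt0.
rewrite lerDl; apply: sumr_ge0 => i _; rewrite !mxE; exact: mul_conjC_ge0.
Qed.

Variable m : nat.
Local Notation k := m.+3.
Local Notation d := (2 * (k - 1)%:R : C).
Local Notation lam := (2 * (k - 1)%:R - 4 / 3 : C).
Local Notation F := (Fmat C k).
Local Notation g := (gmat C k).

Lemma adjg : adj g = g.
Proof. by rewrite hadj_real ?gsym //; exact: realg. Qed.

Lemma FtG : F^T *m g = lam *: F^T.
Proof.
rewrite /gmat mulmxBr mulmxA FtF mul_scalar_mx mul_mx_scalar.
by rewrite scalerBl.
Qed.

Lemma sv_lam : singular_value g lam.
Proof.
split; first exact: ltW (lam_gt0 C m).
apply/eigenvalueP; exists (row 0 F^T).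
  rewrite adjg mulmxA -row_mul FtG -row_mul -scalemxAl FtG scalerA -expr2.
  by apply/rowP => j; rewrite !mxE.
apply/eqP => h.
have := congr1 (fun M => (M *m F) 0 0) h.
rewrite /= -row_mul FtF mul0mx !mxE eqxx mulr1n => /eqP.
by rewrite (negPf (d_neq0 C m)).
Qed.

Lemma sv_max t : singular_value g t -> t <= lam.
Proof.
move=> [t0 /eigenvalueP [v vE vn0]].
set c := (d - 8 / 3) / d.
have G2 := g2 (c := c) (d_neq0 C m) erefl.
rewrite adjg -{1}gsym G2 in vE.
set M := Mm C k in G2 vE.
have E1 : (v *m ((lam ^+ 2 *: 1%:M - c *: (M^T *m M))) *m adj v) 0 0 =
    t ^+ 2 * (v *m adj v) 0 0.
  by rewrite vE -scalemxAl mxE.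
have E2 : (v *m ((lam ^+ 2 *: 1%:M - c *: (M^T *m M))) *m adj v) 0 0 =
    lam ^+ 2 * (v *m adj v) 0 0 - c * ((v *m M^T) *m adj (v *m M^T)) 0 0.
  rewrite mulmxBr mulmxBl mxE [X in _ + X]mxE; congr (_ - _).
    by rewrite -scalemxAr -scalemxAl mulmx1 mxE.
  rewrite -scalemxAr -scalemxAl mxE hadjM (hadj_real (realmT (realMm C k))).
  by rewrite trmxK !mulmxA.
have H : 0 <= (lam ^+ 2 - t ^+ 2) * (v *m adj v) 0 0.
  have -> : (lam ^+ 2 - t ^+ 2) * (v *m adj v) 0 0 =
     c * ((v *m M^T) *m adj (v *m M^T)) 0 0.
    by rewrite mulrBl -E1 E2; ring.
  by apply: mulr_ge0; [exact: c_ge0 | exact: q_ge0].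
move: H; rewrite pmulr_lge0 ?q_gt0 // subr_ge0.
by rewrite (ler_sqr (x := t)) // nnegrE // ltW // lam_gt0.
Qed.

End Sing.


Section Gamma.
Variable C : numClosedFieldType.
Variable k : nat.
Local Notation T := {ffun 'I_k -> bool}.
Local Notation D := #|{: T}|.

Definition flip (i : 'I_k) (s : T) : T := [ffun j => if j == i then ~~ s j else s j].
Definition sgn (i : 'I_k) (s : T) : C :=
  \prod_(j < k | (j < i)%N) (if s j then -1 else 1).
Definition gam (i : 'I_k) : 'M[C]_D :=
  \matrix_(r, c) (if enum_val c == flip i (enum_val r) then sgn i (enum_val r) else 0).

Lemma flipK i : involutive (flip i).
Proof.
move=> s; apply/ffunP => j; rewrite !ffunE.
by case: (j == i); rewrite ?negbK.
Qed.

Lemma flipC i j s : flip j (flip i s) = flip i (flip j s).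
Proof.
apply/ffunP => l; rewrite !ffunE.
by case: (l == i); case: (l == j).
Qed.

Lemma sgn_flip l i s : sgn i (flip l s) = (if (l < i)%N then - sgn i s else sgn i s).
Proof.
rewrite /sgn; case: ifP => li.
  rewrite (bigD1 l) //= [in RHS](bigD1 l) //= !ffunE eqxx.
  have -> : \prod_(j < k | (j < i)%N && (j != l)) (if flip l s j then -1 else 1 : C) =
            \prod_(j < k | (j < i)%N && (j != l)) (if s j then -1 else 1).
    by apply: eq_bigr => j /andP[_ /negPf jl]; rewrite ffunE jl.
  by case: (s l); rewrite /= ?mulN1r ?mul1r ?opprK.
apply: eq_bigr => j ji; rewrite ffunE.
case: eqP => // E; by rewrite -E ji in li.
Qed.

Lemma sgn2 i s : sgn i s * sgn i s = 1.
Proof.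
rewrite /sgn -big_split /=; apply: big1 => j _.
by case: (s j); rewrite ?mulrNN mulr1.
Qed.

Lemma sgn_real i s : (sgn i s)^* = sgn i s.
Proof.
rewrite /sgn rmorph_prod; apply: eq_bigr => j _.
by case: (s j); rewrite ?rmorphN rmorph1.
Qed.

Lemma sum_enum (t : T) (h : T -> C) :
  \sum_(l < D) (if enum_val l == t then h (enum_val l) else 0) = h t.
Proof.
rewrite (bigD1 (enum_rank t)) //= enum_rankK eqxx big1 ?addr0 // => l ne.
case: eqP => // E; by rewrite -E enum_valK eqxx in ne.
Qed.

Lemma gamM i j r c :
  (gam i *m gam j) r c =
  if enum_val c == flip j (flip i (enum_val r))
  then sgn i (enum_val r) * sgn j (flip i (enum_val r)) else 0.
Proof.
rewrite mxE.
transitivity (\sum_(l < D) (if enum_val l == flip i (enum_val r)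
   then (fun u => sgn i (enum_val r) * (if enum_val c == flip j u then sgn j u else 0))
        (enum_val l) else 0)).
  apply: eq_bigr => l _; rewrite !mxE; case: eqP => [->|_] //=; by rewrite mul0r.
rewrite (sum_enum _ (fun u => sgn i (enum_val r) * (if enum_val c == flip j u then sgn j u else 0))).
by case: ifP => _; rewrite ?mulr0.
Qed.

Lemma gam_sq i : gam i *m gam i = 1%:M.
Proof.
apply/matrixP => r c; rewrite gamM flipK mxE sgn_flip ltnn sgn2.
rewrite (inj_eq enum_val_inj) eq_sym.
by case: (r == c).
Qed.

Lemma gam_anti i j : i != j -> gam i *m gam j = - (gam j *m gam i).
Proof.
move=> ij; apply/matrixP => r c; rewrite [RHS]mxE !gamM flipC.
case: ifP => _; last by rewrite oppr0.
rewrite !sgn_flip.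
case: (ltngtP i j) => [lij|lji|eij].
- ring.
- ring.
- by move: ij; rewrite -val_eqE /= eij eqxx.
Qed.

Lemma gam_sym i : (gam i)^T = gam i.
Proof.
apply/matrixP => r c; rewrite !mxE.
have E : (enum_val r == flip i (enum_val c)) = (enum_val c == flip i (enum_val r)).
  apply/eqP/eqP => [->|->]; by rewrite flipK.
rewrite E; case: eqP => // ->.
by rewrite sgn_flip ltnn.
Qed.

Lemma gam_real i : realm (gam i).
Proof.
apply/matrixP => r c; rewrite !mxE.
by case: ifP => _; rewrite ?sgn_real ?rmorph0.
Qed.

Lemma gam_adj i : adj (gam i) = gam i.
Proof. by rewrite hadj_real ?gam_sym //; exact: gam_real. Qed.

Lemma gam_tr i j : \tr (gam i *m gam j) = (D * (i == j))%:R.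
Proof.
case: (eqVneq i j) => [->|ij].
  by rewrite gam_sq mxtrace1 /= muln1.
rewrite /= muln0.
have E : \tr (gam i *m gam j) = - \tr (gam i *m gam j).
  by rewrite {1}gam_anti // raddfN /= mxtrace_mulC.
apply/eqP; move/eqP: E; rewrite -subr_eq0 opprK -mulr2n mulrn_eq0 /=.
done.
Qed.

End Gamma.


Section Obs2.
Variable C : numClosedFieldType.
Variable k : nat.
Local Notation T := {ffun 'I_k -> bool}.
Local Notation D := #|{: T}|.
Local Notation F := (Fmat C k).
Local Notation gm := (@gam C k).

Lemma sum_eqR n (s : 'I_n) (h : 'I_n -> C) : \sum_(s' < n) (s == s')%:R * h s' = h s.
Proof.
rewrite (bigD1 s) //= eqxx mul1r big1 ?addr0 // => s' ne.
by rewrite eq_sym (negPf ne) mul0r.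
Qed.

Lemma anti_pt c c' : gm c *m gm c' + gm c' *m gm c = ((c == c')%:R * 2) *: 1%:M.
Proof.
case: (eqVneq c c') => [->|ne].
  by rewrite gam_sq mul1r scaler_nat mulr2n.
by rewrite (@gam_anti C _ _ _ ne) addNr mul0r scale0r.
Qed.

Lemma anti_sum (f : 'I_k -> C) :
  (\sum_c f c *: gm c) *m (\sum_c f c *: gm c) = (\sum_c f c ^+ 2) *: 1%:M.
Proof.
set S := _ *m _.
have ES : S = \sum_c \sum_c' (f c * f c') *: (gm c *m gm c').
  rewrite /S mulmx_suml; apply: eq_bigr => c _.
  rewrite mulmx_sumr; apply: eq_bigr => c' _.
  by rewrite -scalemxAl -scalemxAr scalerA.
apply: (@scalerI _ _ 2); first by rewrite pnatr_eq0.
have -> : 2 *: S = S + S by rewrite scaler_nat mulr2n.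
rewrite ES [X in _ + X]exchange_big -big_split /=.
transitivity ((\sum_c \sum_c' ((f c * f c') * ((c == c')%:R * 2))) *: (1%:M : 'M[C]_D)).
  rewrite scaler_suml; apply: eq_bigr => c _.
  rewrite scaler_suml -big_split; apply: eq_bigr => c' _ /=.
  by rewrite [f c' * f c]mulrC -scalerDr anti_pt scalerA.
rewrite scalerA; congr (_ *: _).
rewrite mulr_sumr; apply: eq_bigr => c _.
rewrite (bigD1 c) //= eqxx big1 ?addr0 => [|c' ne]; first by rewrite expr2 mul1r mulrC.
by rewrite eq_sym (negPf ne) mul0r mulr0.
Qed.

Lemma Fdiag x : \sum_c F x c ^+ 2 = 2.
Proof.
have := enum_valP x; rewrite /Fidx inE.
under eq_bigr => c _ do rewrite mxE.
rewrite /Frow; case: (enum_val x) => [[i j] b] /= ij.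
have s2 : (if b then 1 else -1 : C) * (if b then 1 else -1) = 1.
  by case: b; rewrite ?mulrNN mulr1.
set s : C := if b then 1 else -1 in s2 *.
transitivity (\sum_c ((s * s) * ((c == i)%:R * (c == i)%:R) + (2 * s) * ((c == i)%:R * (c == j)%:R)
    + (c == j)%:R * (c == j)%:R)).
  by apply: eq_bigr => c _; ring.
rewrite !big_split /= -!mulr_sumr !sum_delta !eqxx.
have -> : (i == j) = false by apply/negbTE; rewrite -val_eqE /= neq_ltn ij.
by rewrite s2 mulr0 addr0 mulr1.
Qed.

Definition r2 : C := (sqrtC 2)^-1.

Lemma r2_real : r2^* = r2.
Proof. by rewrite conj_Creal // ger0_real // invr_ge0 sqrtC_ge0 ler0n. Qed.

Lemma r2_sq : r2 * r2 * 2 = 1.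
Proof.
rewrite /r2 -expr2 exprVn sqrtCK mulVf //.
by rewrite pnatr_eq0.
Qed.

Definition Aobs (x : 'I_#|Fidx k|) : 'M[C]_D := r2 *: \sum_c F x c *: gm c.

Lemma Aobs_sq x : Aobs x *m Aobs x = 1%:M.
Proof.
rewrite /Aobs -scalemxAl -scalemxAr scalerA anti_sum Fdiag scalerA r2_sq.
by rewrite scale1r.
Qed.

Lemma Aobs_adj x : adj (Aobs x) = Aobs x.
Proof.
rewrite /Aobs hadjZ r2_real hadj_sum; congr (_ *: _); apply: eq_bigr => c _.
by rewrite hadjZ gam_adj (realmE (realF C k)).
Qed.

Lemma Aobs_sym x : (Aobs x)^T = Aobs x.
Proof.
rewrite /Aobs linearZ /= linear_sum; congr (_ *: _); apply: eq_bigr => c _.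
by rewrite linearZ /= gam_sym.
Qed.

Lemma m1le1 : (-1 : C) <= 1.
Proof. by rewrite -subr_ge0 opprK addr_ge0 ?ler01. Qed.

Lemma Aobs_obs x : observable (Aobs x).
Proof.
split; first exact: Aobs_adj.
move=> a /eigenvalueP [v vE vn0].
have : v = (a ^+ 2) *: v.
  have := congr1 (fun M => M *m Aobs x) vE.
  by rewrite /= -mulmxA Aobs_sq mulmx1 -scalemxAl vE scalerA -expr2.
move/eqP; rewrite -subr_eq0 -{1}[v]scale1r -scalerBl scaler_eq0 (negPf vn0) orbF.
rewrite subr_eq0 eq_sym sqrf_eq1 => /orP[] /eqP ->; rewrite ?lexx ?m1le1 //.
Qed.

End Obs2.


Section State.
Variable C : numClosedFieldType.
Variable n : nat.
Hypothesis n0 : (0 < n)%N.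

Definition evec : 'cV[C]_(n * n) := \sum_(s < n) delta_mx (mxvec_index s s) 0.

Lemma evecE s t : evec (mxvec_index s t) 0 = (s == t)%:R.
Proof.
rewrite summxE.
transitivity (\sum_(u < n) (s == u)%:R * (t == u)%:R : C).
  apply: eq_bigr => u _; rewrite mxE (mxvec_index_inj s u t u) eqxx andbT.
  by case: (s == u); case: (t == u); rewrite ?mulr1 ?mulr0 ?mul0r.
by rewrite (sum_eqR s (fun u => (t == u)%:R)) eq_sym.
Qed.

Lemma evec_real : realm evec.
Proof.
apply/matrixP => p q; case/mxvec_indexP: p => s t.
by rewrite !mxE ord1 evecE rmorph_nat.
Qed.

Definition rhoS : 'M[C]_(n * n) := (n%:R)^-1 *: (evec *m evec^T).

Lemma qc_ge0 p (w : 'cV[C]_p) : 0 <= (adj w *m w) 0 0.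
Proof.
rewrite mxE; apply: sumr_ge0 => j _; rewrite !mxE mulrC; exact: mul_conjC_ge0.
Qed.

Lemma nR0 : (n%:R : C) != 0.
Proof. by rewrite pnatr_eq0 -lt0n. Qed.

Lemma rhoS_density : density rhoS.
Proof.
split; [|split].
- rewrite /Defs.hermitian /rhoS hadjZ fmorphV rmorph_nat hadjM.
  by rewrite (hadj_real evec_real) (hadj_real (realmT evec_real)) trmxK.
- move=> x.
  have -> : (adj x *m rhoS *m x) 0 0 = (n%:R)^-1 * (adj (evec^T *m x) *m (evec^T *m x)) 0 0.
    rewrite /rhoS -scalemxAr -scalemxAl mxE !mulmxA hadjM.
    by rewrite (hadj_real (realmT evec_real)) trmxK.
  by apply: mulr_ge0; [rewrite invr_ge0 ler0n | exact: qc_ge0].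
- rewrite /rhoS mxtraceZ mxtrace_mulC /mxtrace big_ord1 mxE.
  rewrite sum_mxvec.
  transitivity ((n%:R)^-1 * \sum_(s < n) (1 : C)).
    congr (_ * _); apply: eq_bigr => s _.
    rewrite (bigD1 s) //= big1 ?addr0 => [|t ne]; rewrite !mxE evecE.
      by rewrite eqxx mulr1.
    by rewrite eq_sym (negPf ne) mulr0.
  have -> : \sum_(s < n) (1 : C) = n%:R by rewrite -[n in n%:R]card_ord -sumr_const.
  by rewrite mulVf // nR0.
Qed.

Lemma trace_state (A B : 'M[C]_n) :
  \tr (rhoS *m kron A B) = (n%:R)^-1 * \sum_s \sum_t A s t * B s t.
Proof.
rewrite /rhoS -scalemxAl mxtraceZ; congr (_ * _).
rewrite -mulmxA mxtrace_mulC /mxtrace big_ord1 mxE sum_mxvec.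
transitivity (\sum_(t1 < n) \sum_(t2 < n)
   (t1 == t2)%:R * \sum_(s1 < n) \sum_(s2 < n) (s1 == s2)%:R * (A s1 t1 * B s2 t2)).
  apply: eq_bigr => t1 _; apply: eq_bigr => t2 _.
  rewrite evecE mulrC mxE sum_mxvec; congr (_ * _).
  apply: eq_bigr => s1 _; apply: eq_bigr => s2 _.
  by rewrite [evec^T _ _]mxE evecE kronE.
under eq_bigr => t1 _ do under eq_bigr => t2 _ do under eq_bigr => s1 _ do rewrite (sum_eqR s1).
under eq_bigr => t1 _ do rewrite (sum_eqR t1).
by rewrite exchange_big.
Qed.

End State.


Section Attain.
Variable C : numClosedFieldType.
Variable m : nat.
Local Notation k := m.+3.
Local Notation T := {ffun 'I_k -> bool}.
Local Notation D := #|{: T}|.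
Local Notation F := (Fmat C k).
Local Notation g := (gmat C k).
Local Notation d := (2 * (k - 1)%:R : C).
Local Notation lam := (2 * (k - 1)%:R - 4 / 3 : C).
Local Notation A := (@Aobs C k).

Lemma D0 : (0 < D)%N.
Proof.
by rewrite card_ffun card_bool card_ord expn_gt0.
Qed.

Lemma tr_mulT n (X Y : 'M[C]_n) : \tr (X *m Y^T) = \sum_s \sum_t X s t * Y s t.
Proof. by apply: eq_bigr => s _; rewrite mxE; apply: eq_bigr => t _; rewrite mxE. Qed.

Lemma trAA x y : \tr (A x *m A y) = r2 C * r2 C * (D%:R * (F *m F^T) x y).
Proof.
have -> : A x *m A y = (r2 C * r2 C) *:
    \sum_c \sum_c' (F x c * F y c') *: (gam C c *m gam C c').
  rewrite /Aobs -scalemxAl -scalemxAr scalerA; congr (_ *: _).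
  rewrite mulmx_suml; apply: eq_bigr => c _.
  rewrite mulmx_sumr; apply: eq_bigr => c' _.
  by rewrite -scalemxAl -scalemxAr scalerA.
rewrite mxtraceZ; congr (_ * _).
rewrite raddf_sum mxE mulr_sumr; apply: eq_bigr => c _ /=.
rewrite raddf_sum /=.
under eq_bigr => c' _ do rewrite mxtraceZ gam_tr natrM mulrCA.
rewrite -mulr_sumr; congr (_ * _); rewrite [F^T _ _]mxE.
rewrite (bigD1 c) //= eqxx mulr1 big1 ?addr0 // => c' ne.
by rewrite eq_sym (negPf ne) mulr0.
Qed.

Lemma inner x y : \tr (rhoS C D *m kron (A x) (A y)) = r2 C * r2 C * (F *m F^T) x y.
Proof.
rewrite trace_state -tr_mulT Aobs_sym trAA.
have h := nR0 C D0.
field; exact: h.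
Qed.

Lemma qbias_val : qbias g (rhoS C D) A A = lam * (k * (k - 1))%:R.
Proof.
rewrite /qbias.
under eq_bigr => x _ do under eq_bigr => y _ do rewrite inner mulrCA.
transitivity (r2 C * r2 C * \tr (g *m (F *m F^T)^T)).
  rewrite tr_mulT mulr_sumr; apply: eq_bigr => x _.
  by rewrite mulr_sumr.
rewrite Psym /gmat mulmxBl PP mul_scalar_mx -scalerBl mxtraceZ mxtrace_mulC FtF.
rewrite mxtrace_scalar -[_ *+ k]mulr_natr natrM.
transitivity (lam * ((k%:R * (k - 1)%:R)) * (r2 C * r2 C * 2)); first by ring.
by rewrite r2_sq mulr1.
Qed.

End Attain.

Unset Implicit Arguments.

Theorem mainTheorem13 (C : numClosedFieldType) (k : nat) (hk : (3 <= k)%N) :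
  largest_singular_value (gmat C k) (2 * (k - 1)%:R - 4 / 3)
  /\ (forall (n1 n2 : nat) (rho : 'M[C]_(n1 * n2))
        (A1 : 'I_#|Fidx k| -> 'M[C]_n1) (A2 : 'I_#|Fidx k| -> 'M[C]_n2),
        density rho -> (forall x, observable (A1 x)) ->
        (forall x, observable (A2 x)) ->
        qbias (gmat C k) rho A1 A2 <= (2 * (k - 1)%:R - 4 / 3) * (k * (k - 1))%:R)
  /\ (exists (n1 n2 : nat) (rho : 'M[C]_(n1 * n2))
        (A1 : 'I_#|Fidx k| -> 'M[C]_n1) (A2 : 'I_#|Fidx k| -> 'M[C]_n2),
        [/\ density rho, (forall x, observable (A1 x)),
            (forall x, observable (A2 x)) &
        qbias (gmat C k) rho A1 A2 = (2 * (k - 1)%:R - 4 / 3) * (k * (k - 1))%:R]).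
Proof.
case: k hk => [|[|[|m]]] // _.
split; [split|split].
- exact: sv_lam.
- exact: sv_max.
- move=> n1 n2 rho A1 A2 dr o1 o2; exact: upper.
- exists #|{: {ffun 'I_m.+3 -> bool}}|, #|{: {ffun 'I_m.+3 -> bool}}|.
  exists (rhoS C #|{: {ffun 'I_m.+3 -> bool}}|), (Aobs C (k:=m.+3)), (Aobs C (k:=m.+3)).
  split.
  + exact: rhoS_density (D0 m).
  + exact: Aobs_obs.
  + exact: Aobs_obs.
  + exact: qbias_val.
Qed.
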